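(* For every natural number $n\geq 1$ there is a complete theory $T_n$ with ${\rm ar}(T_n)=n$.
   Context: For $n\geq 1$, a formula $\varphi(\overline{x})$ of a complete theory $T$ is $n$-ary if it is $T$-equivalent to a Boolean combination of $T$-formulas each of which has at most $n$ free variables. $T$ is unary ($1$-ary) if every $T$-formula is $T$-equivalent to a Boolean combination of $T$-formulas with one free variable and formulas of the form $x\approx y$; for $n\geq 2$, $T$ is $n$-ary if every $T$-formula is $n$-ary; $T$ is $0$-ary if every formula is $T$-equivalent to a sentence. The arity ${\rm ar}(T)$ is the number $n$ such that $T$ is $n$-ary and not $(n-1)$-ary, and ${\rm ar}(T)=\infty$ if $T$ is $n$-ary for no $n$. *)

(* Defs.v *)
From mathcomp Require Import all_boot.
Set Implicit Arguments. Unset Strict Implicit. Unset Printing Implicit Defensive.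

(* A first-order signature: function symbols and relation symbols with arities
   (constants are 0-ary function symbols). *)
Record signature := Signature {
  func : Type; func_ar : func -> nat;
  rel  : Type; rel_ar  : rel -> nat }.

Section Syntax.
Variable L : signature.

Inductive term : Type :=
  | tvar : nat -> term
  | tapp : forall f : func L, ('I_(func_ar f) -> term) -> term.

Inductive formula : Type :=
  | fFalse : formula
  | fTrue  : formula
  | fEq    : term -> term -> formula
  | fRel   : forall r : rel L, ('I_(rel_ar r) -> term) -> formula
  | fNot   : formula -> formula
  | fAnd   : formula -> formula -> formula
  | fOr    : formula -> formula -> formula
  | fImp   : formula -> formula -> formula
  | fIff   : formula -> formula -> formula
  | fEx    : nat -> formula -> formula
  | fAll   : nat -> formula -> formula.

Fixpoint tvars (t : term) : seq nat :=
  match t with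
  | tvar v => [:: v]
  | tapp f args => flatten [seq tvars (args i) | i <- enum 'I_(func_ar f)]
  end.

Fixpoint fv (p : formula) : seq nat :=
  match p with
  | fFalse | fTrue => [::]
  | fEq t1 t2 => tvars t1 ++ tvars t2
  | fRel r args => flatten [seq tvars (args i) | i <- enum 'I_(rel_ar r)]
  | fNot p => fv p
  | fAnd p q | fOr p q | fImp p q | fIff p q => fv p ++ fv q
  | fEx v p | fAll v p => [seq x <- fv p | x != v]
  end.

Definition nfv (p : formula) : nat := size (undup (fv p)).

Definition sentence (p : formula) : Prop := fv p = [::].

Inductive bool_comb (S : formula -> Prop) : formula -> Prop :=
  | bc_base p : S p -> bool_comb S p
  | bc_False : bool_comb S fFalse
  | bc_True  : bool_comb S fTrue
  | bc_Not p : bool_comb S p -> bool_comb S (fNot p)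
  | bc_And p q : bool_comb S p -> bool_comb S q -> bool_comb S (fAnd p q)
  | bc_Or  p q : bool_comb S p -> bool_comb S q -> bool_comb S (fOr p q)
  | bc_Imp p q : bool_comb S p -> bool_comb S q -> bool_comb S (fImp p q)
  | bc_Iff p q : bool_comb S p -> bool_comb S q -> bool_comb S (fIff p q).

End Syntax.

Arguments tvar {L}.
Arguments fFalse {L}.
Arguments fTrue {L}.

(* L-structures (nonempty domain) *)
Record structure (L : signature) := Structure {
  dom :> Type;
  dom_elt : dom;
  interp_func : forall f : func L, ('I_(func_ar f) -> dom) -> dom;
  interp_rel  : forall r : rel L, ('I_(rel_ar r) -> dom) -> Prop }.

Arguments interp_func {L} s f : rename.
Arguments interp_rel {L} s r : rename.

Section Semantics.
Variables (L : signature) (M : structure L).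

Definition update (s : nat -> M) (v : nat) (a : M) : nat -> M :=
  fun x => if x == v then a else s x.

Fixpoint teval (s : nat -> M) (t : term L) : M :=
  match t with
  | tvar v => s v
  | tapp f args => interp_func M f (fun i => teval s (args i))
  end.

Fixpoint sat (s : nat -> M) (p : formula L) : Prop :=
  match p with
  | fFalse => False
  | fTrue => True
  | fEq t1 t2 => teval s t1 = teval s t2
  | fRel r args => interp_rel M r (fun i => teval s (args i))
  | fNot p => ~ sat s p
  | fAnd p q => sat s p /\ sat s q
  | fOr p q => sat s p \/ sat s q
  | fImp p q => sat s p -> sat s q
  | fIff p q => sat s p <-> sat s q
  | fEx v p => exists a : M, sat (update s v a) p
  | fAll v p => forall a : M, sat (update s v a) p
  end.

End Semantics.

Definition theory (L : signature) := formula L -> Prop.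

Definition is_model (L : signature) (T : theory L) (M : structure L) : Prop :=
  forall p, T p -> forall s : nat -> M, sat s p.

(* semantic consequence T |= p (equivalent to provability by Goedel's
   completeness theorem) *)
Definition entails (L : signature) (T : theory L) (p : formula L) : Prop :=
  forall M : structure L, is_model T M -> forall s : nat -> M, sat s p.

Definition complete_theory (L : signature) (T : theory L) : Prop :=
  (forall p, T p -> sentence p) /\
  (exists M : structure L, is_model T M) /\
  (forall p, sentence p -> entails T p \/ entails T (fNot p)).

Definition T_equiv (L : signature) (T : theory L) (p q : formula L) : Prop :=
  entails T (fIff p q).

Definition var_eq (L : signature) (p : formula L) : Prop :=
  exists x y : nat, p = fEq (tvar x) (tvar y).

Definition nary_formula (L : signature) (T : theory L) (n : nat) (p : formula L) : Prop :=
  exists q, bool_comb (fun r => nfv r <= n) q /\ T_equiv T p q.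

Definition nary_theory (L : signature) (T : theory L) (n : nat) : Prop :=
  match n with
  | 0 => forall p : formula L, exists q, sentence q /\ T_equiv T p q
  | 1 => forall p : formula L, exists q,
           bool_comb (fun r => nfv r <= 1 \/ var_eq r) q /\ T_equiv T p q
  | _ => forall p : formula L, nary_formula T n p
  end.

Definition arity_is (L : signature) (T : theory L) (n : nat) : Prop :=
  nary_theory T n /\
  match n with 0 => True | m.+1 => ~ nary_theory T m end.

(* Main.v *)
Require Import Defs.
From Stdlib Require Import Classical FunctionalExtensionality.
From mathcomp Require Import all_boot.
Set Implicit Arguments. Unset Strict Implicit. Unset Printing Implicit Defensive.

Section Constr.
Variable n : nat.
Local Notation N := n.+1.

Definition X := (bool * 'I_N)%type.
Definition inG (g : 'I_N -> bool) : Prop := \big[addb/false]_(i < N) g i = false.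
Definition act (g : 'I_N -> bool) (x : X) : X := (x.1 (+) g x.2, x.2).

Lemma act_comp g h x : act h (act g x) = act (fun i => h i (+) g i) x.
Proof. by case: x => b i; rewrite /act /= -addbA (addbC (g i)). Qed.
Lemma act_inv g x : act g (act g x) = x.
Proof. by case: x => b i; rewrite /act /= -addbA addbb addbF. Qed.
Lemma act0 x : act (fun _ => false) x = x.
Proof. by case: x => b i; rewrite /act /= addbF. Qed.
Lemma inG0 : inG (fun _ => false).
Proof. by rewrite /inG big1. Qed.
Lemma inG_add g h : inG g -> inG h -> inG (fun i => g i (+) h i).
Proof. by rewrite /inG big_split /= => -> ->. Qed.
Lemma sum_ind (c : 'I_N) : \big[addb/false]_(i < N) (i == c) = true.
Proof.
by rewrite (bigD1 c) //= eqxx big1 // => i /negbTE ->.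
Qed.

Definition RR := ('I_N -> X) -> Prop.
Definition L0 : signature := @Signature void (fun v => match v with end) RR (fun _ => N).
Definition interp (r : RR) (a : 'I_N -> X) : Prop :=
  exists h, inG h /\ r (fun j => act h (a j)).
Definition M0 : structure L0 :=
  @Structure L0 X (false, ord0) (fun (f : void) _ => match f with end) interp.

Notation sat0 := (@sat L0 M0).
Notation upd := (@update L0 M0).

Lemma term_var (t : term L0) : exists v, t = tvar v.
Proof. case: t => [v|f]; [by exists v | by case: f]. Qed.

Lemma coinc (M : structure L0) p : forall s s' : nat -> M,
  {in fv p, s =1 s'} -> sat s p <-> sat s' p.
Proof.
elim: p => //=.
- move=> t1 t2 s s'.
  have [v1 ->] := term_var t1; have [v2 ->] := term_var t2 => H.
  by rewrite /= (H v1) ?(H v2) //= !inE eqxx ?orbT.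
- move=> r args s s' H.
  have -> : (fun i => teval s (args i)) = (fun i => teval s' (args i)) => //.
  apply: functional_extensionality => i.
  have [v Hv] := term_var (args i); rewrite Hv /=; apply: H.
  apply/flatten_mapP; exists i; first by rewrite mem_enum.
  by rewrite Hv inE.
- by move=> p IH s s' H; rewrite (IH s s' H).
- move=> p IHp q IHq s s' H.
  rewrite (IHp s s') ?(IHq s s') // => x Hx; apply: H; by rewrite mem_cat Hx ?orbT.
- move=> p IHp q IHq s s' H.
  rewrite (IHp s s') ?(IHq s s') // => x Hx; apply: H; by rewrite mem_cat Hx ?orbT.
- move=> p IHp q IHq s s' H.
  rewrite (IHp s s') ?(IHq s s') // => x Hx; apply: H; by rewrite mem_cat Hx ?orbT.
- move=> p IHp q IHq s s' H.
  rewrite (IHp s s') ?(IHq s s') // => x Hx; apply: H; by rewrite mem_cat Hx ?orbT.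
- move=> v p IH s s' H.
  have E a : sat (update s v a) p <-> sat (update s' v a) p.
    apply: IH => x Hx; rewrite /update; case: eqP => // /eqP ne.
    by apply: H; rewrite mem_filter ne.
  by split=> -[a Ha]; exists a; apply/E.
- move=> v p IH s s' H.
  have E a : sat (update s v a) p <-> sat (update s' v a) p.
    apply: IH => x Hx; rewrite /update; case: eqP => // /eqP ne.
    by apply: H; rewrite mem_filter ne.
  by split=> Ha a; apply/E.
Qed.

Lemma sat_ext (M : structure L0) p (s s' : nat -> M) : s =1 s' -> sat s p <-> sat s' p.
Proof. by move=> H; apply: coinc => x _; apply: H. Qed.

Lemma invar g (Hg : inG g) p : forall s, sat0 s p <-> sat0 (fun v => act g (s v)) p.
Proof.
elim: p => //=.
- move=> t1 t2 s.
  have [v1 ->] := term_var t1; have [v2 ->] := term_var t2 => /=.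
  by split => [->//|/(congr1 (act g))]; rewrite !act_inv.
- move=> r args s.
  have -> : (fun i : 'I_N => @teval L0 M0 (fun v => act g (s v)) (args i)) = (fun i => act g (@teval L0 M0 s (args i))).
    apply: functional_extensionality => i.
    by have [v ->] := term_var (args i).
  rewrite /interp; split => -[h [Hh Hr]];
  (exists (fun i => h i (+) g i); split; first exact: inG_add);
  move: Hr; congr r; apply: functional_extensionality => j; rewrite ?act_comp;
  congr act; apply: functional_extensionality => i;
  by case: (h i); case: (g i).
- by move=> p IH s; rewrite IH.
- by move=> p IHp q IHq s; rewrite IHp IHq.
- by move=> p IHp q IHq s; rewrite IHp IHq.
- by move=> p IHp q IHq s; rewrite IHp IHq.
- by move=> p IHp q IHq s; rewrite IHp IHq.
- move=> v p IH s; split => -[a Ha]; exists (act g a).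
  + have E : (fun x => act g (upd s v a x)) =1 upd (fun v0 => act g (s v0)) v (act g a).
      by move=> x; rewrite /update; case: eqP.
    by apply/(@sat_ext M0 p _ _ E); apply: (proj1 (IH _)).
  + apply/IH.
    have E : (fun x => act g (upd s v (act g a) x)) =1 upd (fun v0 => act g (s v0)) v a.
      by move=> x; rewrite /update; case: eqP => // _; rewrite act_inv.
    by apply/(@sat_ext M0 p _ _ E).
- move=> v p IH s; split => Ha a.
  + have E : (fun x => act g (upd s v (act g a) x)) =1 upd (fun v0 => act g (s v0)) v a.
      by move=> x; rewrite /update; case: eqP => // _; rewrite act_inv.
    by apply/(@sat_ext M0 p _ _ E); apply: (proj1 (IH _)).
  + apply/IH.
    have E : (fun x => act g (upd s v a x)) =1 upd (fun v0 => act g (s v0)) v (act g a).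
      by move=> x; rewrite /update; case: eqP.
    by apply/(@sat_ext M0 p _ _ E).
Qed.


Definition T0 : theory L0 := fun p => sentence p /\ forall s, sat0 s p.

Definition closeF (vs : seq nat) (p : formula L0) : formula L0 :=
  foldr (fun v r => fAll v r) p vs.

Lemma mem_fv_close vs p x : (x \in fv (closeF vs p)) = (x \in fv p) && (x \notin vs).
Proof.
elim: vs => [|v vs IH] /=; first by rewrite andbT.
by rewrite mem_filter IH inE negb_or; case: (x == v); case: (x \in fv p); case: (x \in vs).
Qed.

Lemma sentence_close p : sentence (closeF (fv p) p).
Proof.
rewrite /sentence; case E: (fv (closeF (fv p) p)) => [//|x l].
have : x \in fv (closeF (fv p) p) by rewrite E inE eqxx.
by rewrite mem_fv_close; case: (x \in fv p).
Qed.

Lemma sat_close (M : structure L0) vs p : forall s : nat -> M, sat s (closeF vs p) -> sat s p.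
Proof.
elim: vs => [//|v vs IH] s /= H.
have := IH _ (H (s v)).
by apply: (proj1 (sat_ext _ _)) => x; rewrite /update; case: eqP => // ->.
Qed.

Lemma close_sat (M : structure L0) vs p : (forall s : nat -> M, sat s p) -> forall s : nat -> M, sat s (closeF vs p).
Proof. by elim: vs => [//|v vs IH] H s /= a; apply: IH. Qed.

Lemma valid_entails p : (forall s, sat0 s p) -> entails T0 p.
Proof.
move=> H M HM s; apply: (sat_close (vs := fv p)); apply: HM; split.
  exact: sentence_close.
exact: close_sat.
Qed.

Lemma T0_complete : complete_theory T0.
Proof.
split; first by move=> p [].
split; first by exists M0 => p [_ H].
move=> p Hp; case: (classic (forall s, sat0 s p)) => H.
  by left; apply: valid_entails.
right; apply: valid_entails => s Hs; apply: H => s'.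
by apply/(coinc (s := s)) => //; rewrite Hp.
Qed.


Lemma inG_n0 h (n0 : n = 0) : inG h -> forall i, h i = false.
Proof.
have E i : i = ord0 :> 'I_N by apply: val_inj => /=; have := ltn_ord i; move: (nat_of_ord i); rewrite n0; case.
rewrite /inG (bigD1 ord0) //= big1 ?addbF => [H i|i]; first by rewrite (E i).
by rewrite (E i) eqxx.
Qed.

Lemma P2 m (t f : 'I_m -> X) :
  (forall w : {ffun 'I_N -> 'I_m}, exists h, inG h /\ forall j, act h (t (w j)) = f (w j)) ->
  exists g, inG g /\ forall k, act g (t k) = f k.
Proof.
move=> H.
have col k : (f k).2 = (t k).2.
  have [h [_ Hh]] := H [ffun=> k]; have := Hh ord0; rewrite ffunE => <-.
  by [].
pose d k := (t k).1 (+) (f k).1.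
have actE h k : h (t k).2 = d k -> act h (t k) = f k.
  rewrite /d /act; move: (col k); case: (t k) => b c; case: (f k) => b' c' /= -> ->.
  by case: b; case: b'.
have actE' h k : act h (t k) = f k -> h (t k).2 = d k.
  rewrite /d /act; case: (t k) => b c; case: (f k) => b' c' /= [<- _].
  by case: b; case: (h c).
have pair k k' : (t k).2 = (t k').2 -> d k = d k'.
  move=> Ec; have [n0|npos] := posnP n.
    have [h [Hh Hk]] := H [ffun=> k]; have [h' [Hh' Hk']] := H [ffun=> k'].
    have := Hk ord0; have := Hk' ord0; rewrite !ffunE => /actE' <- /actE' <-.
    by rewrite (inG_n0 n0 Hh) (inG_n0 n0 Hh').
  have lt1 : 1 < N by [].
  pose j1 : 'I_N := Ordinal lt1.
  have [h [Hh Hk]] := H [ffun j => if j == ord0 then k else k'].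
  have := Hk ord0; have := Hk j1; rewrite !ffunE eqxx /=.
  by move=> /actE' <- /actE' <-; rewrite Ec.
have [allhit|somemiss] := boolP [forall i : 'I_N, [exists k, (t k).2 == i]].
  have [k0 _] := existsP (forallP allhit ord0).
  pose rep i := odflt k0 [pick k | (t k).2 == i].
  have repP i : (t (rep i)).2 = i.
    rewrite /rep; case: pickP => [k /eqP //|none].
    by have [k /eqP Hk] := existsP (forallP allhit i); have := none k; rewrite Hk eqxx.
  have [h [Hh Hr]] := H [ffun i => rep i].
  exists h; split => // k; apply: actE.
  have := Hr (t k).2; rewrite ffunE => /actE'; rewrite repP => ->.
  by apply: pair; rewrite repP.
move/forallPn: somemiss => [c /existsPn Hc].
pose g0 i := if [pick k | (t k).2 == i] is Some k then d k else false.
pose g i := if i == c then \big[addb/false]_(i0 | i0 != c) g0 i0 else g0 i.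
exists g; split.
  have E : \big[addb/false]_(i < N | i != c) g i = \big[addb/false]_(i < N | i != c) g0 i.
    by apply: eq_bigr => i; rewrite /g => /negbTE ->.
  by rewrite /inG (bigD1 c) //= E /g eqxx addbb.
move=> k; apply: actE.
have nc : ((t k).2 == c) = false by apply/negbTE; apply: Hc.
rewrite /g nc /g0; case: pickP => [k' /eqP Hk'|none].
  by apply: pair.
by have := none k; rewrite eqxx.
Qed.


Definition atom (V : seq nat) (f : 'I_(size V) -> X) (w : 'I_N -> 'I_(size V)) : formula L0 :=
  @fRel L0 (fun a : 'I_N -> X => a = (fun j => f (w j))) (fun j => tvar (nth 0 V (w j))).

Lemma sat_atom s V (f : 'I_(size V) -> X) (w : 'I_N -> 'I_(size V)) : sat0 s (atom f w) <->
  exists h, inG h /\ forall j, act h (s (nth 0 V (w j))) = f (w j).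
Proof.
rewrite /= /interp; split => -[h [Hh E]]; exists h; split => //.
  by move=> j; have := congr1 (fun F => F j) E.
by apply: functional_extensionality.
Qed.

Lemma nfv_atom V (f : 'I_(size V) -> X) (w : 'I_N -> 'I_(size V)) : nfv (atom f w) <= N.
Proof.
rewrite /nfv /=.
have E : size [seq nth 0 V (w j) | j <- enum 'I_N] = N by rewrite size_map size_enum_ord.
rewrite -[X in _ <= X]E.
apply: uniq_leq_size; first exact: undup_uniq.
move=> x; rewrite mem_undup => /flatten_mapP [j Hj]; rewrite inE => /eqP ->.
by apply: map_f.
Qed.

Definition conjF (l : seq (formula L0)) : formula L0 := foldr (fun a b => fAnd a b) fTrue l.

Lemma sat_conjF (I : eqType) (F : I -> formula L0) s l :
  sat0 s (conjF [seq F w | w <- l]) <-> forall w, w \in l -> sat0 s (F w).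
Proof.
elim: l => [|q l IH] /=; first by split.
split => [[H1 H2] r|H]; first by rewrite inE => /orP [/eqP ->|/(proj1 IH H2)].
split; first by apply: H; rewrite inE eqxx.
by apply/IH => r Hr; apply: H; rewrite inE Hr orbT.
Qed.

Lemma bc_conjF (I : eqType) (F : I -> formula L0) (Q : formula L0 -> Prop) l :
  (forall w, Q (F w)) -> bool_comb Q (conjF [seq F w | w <- l]).
Proof.
elim: l => [|q l IH] H /=; first exact: bc_True.
apply: bc_And; first by apply: bc_base; apply: H.
exact: IH.
Qed.

Definition DD V (f : 'I_(size V) -> X) :=
  conjF [seq atom f w | w : {ffun 'I_N -> 'I_(size V)} <- enum {ffun 'I_N -> 'I_(size V)}].

Definition sf V (f : 'I_(size V) -> X) (v : nat) : X :=
  if insub (index v V) is Some k then f k else (false, ord0).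

Lemma sfE V (f : 'I_(size V) -> X) v (k : 'I_(size V)) : val k = index v V -> sf f v = f k.
Proof.
move=> Hk; rewrite /sf; case: insubP => [k' _ Hk'|]; last by rewrite -Hk ltn_ord.
by congr f; apply: val_inj; rewrite Hk'.
Qed.

Lemma main_equiv p s :
  sat0 s p <-> exists f : {ffun 'I_(size (fv p)) -> X}, sat0 (sf f) p /\ sat0 s (DD f).
Proof.
set V := fv p.
have idx v : v \in V -> index v V < size V by rewrite index_mem.
split => [Hs|[f [Hf HD]]].
  exists [ffun k : 'I_(size V) => s (nth 0 V k)]; split.
    apply/(coinc (s := s)) => // v Hv.
    by rewrite (@sfE V _ v (Ordinal (idx v Hv))) // ffunE /= nth_index.
  apply/sat_conjF => w _; apply/sat_atom.
  by exists (fun _ => false); split; [exact: inG0 | move=> j; rewrite act0 ffunE].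
have [g [Hg Eg]] : exists g, inG g /\ forall k : 'I_(size V), act g (s (nth 0 V k)) = f k.
  apply: (P2 (t := fun k => s (nth 0 V k))) => w.
  by apply/sat_atom; apply: (proj1 (sat_conjF _ _ _) HD); rewrite mem_enum.
apply/(invar Hg); apply: (proj1 (@coinc M0 p (sf f) _ _) Hf) => v Hv.
by rewrite (@sfE V _ v (Ordinal (idx v Hv))) // -Eg /= nth_index.
Qed.

Lemma upper p : exists q, bool_comb (fun r => nfv r <= N) q /\ T_equiv T0 p q.
Proof.
have : forall Fs : seq {ffun 'I_(size (fv p)) -> X}, exists q,
   bool_comb (fun r => nfv r <= N) q /\
   forall s, sat0 s q <-> exists2 f, f \in Fs & (sat0 (sf f) p /\ sat0 s (DD f)).
  elim => [|f Fs [q [Hq Eq]]].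
    by exists fFalse; split; [exact: bc_False | move=> s; split => // -[]].
  case: (classic (sat0 (sf f) p)) => Hf.
    exists (fOr (DD f) q); split.
      apply: bc_Or => //; apply: bc_conjF => w; exact: nfv_atom.
    move=> s /=; rewrite Eq; split.
      case=> [H|[f' Hf' H]]; first by exists f; rewrite ?inE ?eqxx.
      by exists f'; rewrite ?inE ?Hf' ?orbT.
    case=> f' ; rewrite inE => /orP [/eqP -> [_ H]|Hf' H]; first by left.
    by right; exists f'.
  exists q; split => // s; rewrite Eq; split.
    by case=> f' Hf' H; exists f'; rewrite ?inE ?Hf' ?orbT.
  case=> f'; rewrite inE => /orP [/eqP -> [H _]|Hf' H]; first by [].
  by exists f'.
move=> /(_ (enum {ffun 'I_(size (fv p)) -> X})) [q [Hq Eq]].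
exists q; split => //; apply: valid_entails => s /=.
rewrite Eq main_equiv; split => [[f H]|[f _ H]]; last by exists f.
by exists f; rewrite ?mem_enum.
Qed.


Definition colv (v : nat) : 'I_N := inord v.
Definition s0 (v : nat) : X := (false, colv v).
Definition e0 (i : 'I_N) : bool := i == ord0.
Definition s1 (v : nat) : X := act e0 (s0 v).
Definition phi : formula L0 :=
  @fRel L0 (fun a : 'I_N -> X => a = (fun j => (false, j))) (fun j => tvar (val j)).

Lemma phi_s0 : sat0 s0 phi.
Proof.
rewrite /= /interp; exists (fun _ => false); split; first exact: inG0.
by apply: functional_extensionality => j; rewrite act0 /s0 /colv inord_val.
Qed.

Lemma phi_s1 : ~ sat0 s1 phi.
Proof.
rewrite /= /interp => -[h [Hh E]].
have Hj j : h j = e0 j.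
  have := congr1 (fun F => (F j).1) E; rewrite /s1 /s0 /act /colv /= inord_val.
  by case: (h j); case: (e0 j).
have E2 : \big[addb/false]_(i < N) h i = true.
  by rewrite (eq_bigr (fun i => i == ord0)) ?sum_ind // => j _; exact: Hj.
by move: Hh; rewrite /inG E2.
Qed.

Lemma comp_ok psi : nfv psi <= n \/ var_eq psi -> (sat0 s0 psi <-> sat0 s1 psi).
Proof.
case=> [Hn|[x [y ->]]]; last first.
  rewrite /= /s1; split => [->//|/(congr1 (act e0))]; by rewrite !act_inv.
have [c Hc] : exists c : 'I_N, forall v, v \in fv psi -> colv v != c.
  case: (boolP [exists c : 'I_N, all (fun v => colv v != c) (fv psi)]).
    by move=> /existsP [c /allP Hc]; exists c.
  move=> /existsPn Hall; exfalso.
  have : N <= size [seq colv v | v <- undup (fv psi)].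
    rewrite -{1}(size_enum_ord N); apply: uniq_leq_size; first exact: enum_uniq.
    move=> c _; have := Hall c; rewrite -has_predC => /hasP [v Hv /negPn /eqP <-].
    by apply: map_f; rewrite mem_undup.
  by rewrite size_map; move: Hn; rewrite /nfv => Hn H; move: (leq_trans H Hn); rewrite ltnn.
pose g i := e0 i (+) (i == c).
have Hg : inG g by rewrite /inG big_split /= /e0 !sum_ind.
rewrite (invar Hg); apply: coinc => v Hv.
by rewrite /s1 /g /act /=; have /negbTE -> := Hc v Hv; rewrite addbF.
Qed.

Lemma bc_ok (Q : formula L0 -> Prop) q :
  (forall psi, Q psi -> (sat0 s0 psi <-> sat0 s1 psi)) -> bool_comb Q q -> (sat0 s0 q <-> sat0 s1 q).
Proof.
move=> HQ; elim => /=; try tauto.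
Qed.

Lemma lower (Q : formula L0 -> Prop) :
  (forall psi, Q psi -> nfv psi <= n \/ var_eq psi) ->
  ~ (forall p, exists q, bool_comb Q q /\ T_equiv T0 p q).
Proof.
move=> HQ H; have [q [Hq E]] := H phi.
have Eq := bc_ok (fun psi Hpsi => comp_ok (HQ psi Hpsi)) Hq.
have HM : is_model T0 M0 by move=> p [_ Hp].
have E0 := E M0 HM s0; have E1 := E M0 HM s1.
simpl in E0, E1.
apply: phi_s1; apply/E1; apply/Eq; apply/E0; exact: phi_s0.
Qed.

End Constr.

Lemma bc_mono (L : signature) (P P' : formula L -> Prop) q :
  (forall r, P r -> P' r) -> bool_comb P q -> bool_comb P' q.
Proof.
move=> H; elim => *; by [apply: bc_base; apply: H | constructor].
Qed.

Theorem corollary1p7 :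
  forall n : nat, 1 <= n ->
    exists (L : signature) (T : theory L), complete_theory T /\ arity_is T n.
Proof.
case=> [//|n] _; exists (L0 n), (@T0 n); split; first exact: T0_complete.
split.
- case: n => [|n'] /= p; have [q [Hq E]] := upper p; exists q; split => //.
  by apply: bc_mono Hq => r Hr; left.
- case: n => [|[|n']] /= H.
  + apply: (@lower 0 (@sentence _)) => [psi Hpsi|p]; first by left; rewrite /nfv Hpsi.
    by have [q [Hq E]] := H p; exists q; split => //; apply: bc_base.
  + exact: (@lower 1 (fun r => nfv r <= 1 \/ var_eq r)) H.
  + apply: (@lower n'.+2 (fun r => nfv r <= n'.+2)) H => psi Hpsi; by left.
Qed.
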